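(* Let $(M,\mathbf g,\nabla)$ be a Riemann–Cartan space with Levi-Civita connection $D$, let $\{\mathbf e_\alpha\}$ be a moving frame with dual coframe $\{\theta^\alpha\}$, and let $\boldsymbol\partial=\theta^\alpha\nabla_{\mathbf e_\alpha}$ be the Dirac operator acting on sections of the Clifford bundle $\mathcal C\ell(M,\mathtt g)$. Then for every smooth scalar function $f$, $$\boldsymbol\partial^2 f=g^{\beta\rho}\nabla_{\mathbf e_\beta}\nabla_{\mathbf e_\rho}f-g^{\beta\rho}\Gamma^{\alpha}_{\beta\rho}\mathbf e_\alpha(f)-\tfrac12 T^{\alpha}_{\beta\rho}\,\theta^\beta\wedge\theta^\rho\,\mathbf e_\alpha(f),$$ and equivalently $$\boldsymbol\partial^2 f=g^{\beta\alpha}\nabla_{\mathbf e_\beta}\nabla_{\mathbf e_\alpha}f-g^{\beta\rho}\mathring\Gamma^{\alpha}_{\beta\rho}\mathbf e_\alpha(f)+T^{\alpha}_{\alpha\beta}\,\mathbf e^\beta(f)-\tfrac12T^{\alpha}_{\rho\sigma}\,\theta^\rho\wedge\theta^\sigma\,\mathbf e_\alpha(f),$$ where $\mathbf e^\beta=g^{\beta\delta}\mathbf e_\delta$.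
   Context: $\mathbf g$ is a smooth nondegenerate metric on $M$, $g^{\alpha\beta}=\theta^\alpha\cdot\theta^\beta$. A Riemann–Cartan space is a triple $(M,\mathbf g,\nabla)$ with $\nabla$ a linear connection, $\nabla\mathbf g=0$, and nonzero torsion; $\nabla$ acts on forms (as sections of the Clifford bundle of differential forms, where $uv=u\cdot v+u\wedge v$ for $1$-forms) as a derivation, and on functions by $\nabla_{\mathbf e_\alpha}f=\mathbf e_\alpha(f)$. Notation: $[\mathbf e_\beta,\mathbf e_\rho]=c^\alpha_{\beta\rho}\mathbf e_\alpha$, $\nabla_{\mathbf e_\beta}\theta^\alpha=-\Gamma^\alpha_{\beta\rho}\theta^\rho$, $D_{\mathbf e_\beta}\theta^\alpha=-\mathring\Gamma^\alpha_{\beta\rho}\theta^\rho$, torsion components $T^\alpha_{\beta\rho}=\Gamma^\alpha_{\beta\rho}-\Gamma^\alpha_{\rho\beta}-c^\alpha_{\beta\rho}$. $\boldsymbol\partial^2f$ means $\theta^\beta\nabla_{\mathbf e_\beta}(\theta^\rho\nabla_{\mathbf e_\rho}f)$ with Clifford products. *)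

(* Defs.v *)
(* Algebraic (frame-component) model of a Riemann-Cartan
   space: A plays the role of the commutative ring of smooth functions on M,
   the frame fields e_alpha act on A as derivations, and the relevant part of
   the Clifford bundle (scalars + 2-forms) is represented by components
   with respect to the coframe theta^alpha. *)
From HB Require Import structures.
From mathcomp Require Import all_boot all_order all_algebra.
Set Implicit Arguments. Unset Strict Implicit. Unset Printing Implicit Defensive.
Import Order.TTheory GRing.Theory Num.Theory.
Local Open Scope ring_scope.

(* A Clifford element of the form  s + (1/2) B_{ij} theta^i /\ theta^j,
   with B stored as its full (antisymmetric) component array. *)
Record cl2 (A : Type) (n : nat) := Cl2 { cl_scal : A; cl_biv : 'I_n -> 'I_n -> A }.

Section Defs.
Variables (A : comUnitRingType) (n : nat).

(* components of  sum_{b,r} a_{br} theta^b /\ theta^r *)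
Definition wedge_sum (a : 'I_n -> 'I_n -> A) : 'I_n -> 'I_n -> A :=
  fun i j => a i j - a j i.

(* 1-forms u = u_a theta^a are component functions *)
Definition coframe (b : 'I_n) : 'I_n -> A := fun a => (a == b)%:R.

(* Clifford product of 1-forms: u v = u . v + u /\ v, with
   theta^a . theta^b = g^{ab} *)
Definition cliff (g : 'I_n -> 'I_n -> A) (u v : 'I_n -> A) : cl2 A n :=
  Cl2 (\sum_a \sum_b g a b * u a * v b) (wedge_sum (fun a b => u a * v b)).

Definition cl2_sum (F : 'I_n -> cl2 A n) : cl2 A n :=
  Cl2 (\sum_b cl_scal (F b)) (fun i j => \sum_b cl_biv (F b) i j).

(* nabla_{e_b} of the 1-form u_r theta^r, with
   nabla_{e_b} theta^a = - Gam^a_{b r} theta^r  (Gam a b r = Gam^a_{br}) *)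
Definition nabla1 (Gam : 'I_n -> 'I_n -> 'I_n -> A) (e : 'I_n -> A -> A)
  (b : 'I_n) (u : 'I_n -> A) : 'I_n -> A :=
  fun r => e b (u r) - \sum_a u a * Gam a b r.

(* Dirac operator on functions: theta^r nabla_{e_r} f = (e_r f) theta^r *)
Definition dirac0 (e : 'I_n -> A -> A) (f : A) : 'I_n -> A := fun r => e r f.

(* Dirac operator on 1-forms: theta^b nabla_{e_b} u (Clifford product) *)
Definition dirac1 (g : 'I_n -> 'I_n -> A) (Gam : 'I_n -> 'I_n -> 'I_n -> A)
  (e : 'I_n -> A -> A) (u : 'I_n -> A) : cl2 A n :=
  cl2_sum (fun b => cliff g (coframe b) (nabla1 Gam e b u)).

Definition dirac2 g Gam e (f : A) : cl2 A n := dirac1 g Gam e (dirac0 e f).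

Definition torsion (Gam c : 'I_n -> 'I_n -> 'I_n -> A) (a b r : 'I_n) : A :=
  Gam a b r - Gam a r b - c a b r.

Definition is_derivation (D : A -> A) : Prop :=
  forall x y, D (x + y) = D x + D y /\ D (x * y) = D x * y + x * D y.

Definition frame_comm (e : 'I_n -> A -> A) (c : 'I_n -> 'I_n -> 'I_n -> A) : Prop :=
  forall b r f, e b (e r f) - e r (e b f) = \sum_a c a b r * e a f.

Definition metric_sym (g : 'I_n -> 'I_n -> A) : Prop := forall a b, g a b = g b a.

Definition metric_nondeg (g : 'I_n -> 'I_n -> A) : Prop :=
  (\matrix_(i, j) g i j) \in unitmx.

(* nabla g = 0: e_c(g^{ab}) = (nabla_c theta^a).theta^b + theta^a.(nabla_c theta^b) *)
Definition metric_compatible (g : 'I_n -> 'I_n -> A)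
  (Gam : 'I_n -> 'I_n -> 'I_n -> A) (e : 'I_n -> A -> A) : Prop :=
  forall k a b, e k (g a b) = - (\sum_d Gam a k d * g d b) - (\sum_d Gam b k d * g a d).

Definition riemann_cartan g Gam e c : Prop :=
  metric_compatible g Gam e /\ exists a b r, torsion Gam c a b r != 0.

Definition levi_civita g Gamo e c : Prop :=
  metric_compatible g Gamo e /\ forall a b r, torsion Gamo c a b r = 0.

End Defs.

(* Main.v *)
Require Import Defs.
From HB Require Import structures.
From mathcomp Require Import all_boot all_order all_algebra.
From mathcomp Require Import ring.
From Stdlib Require Import FunctionalExtensionality.
Import GRing.Theory.
Local Open Scope ring_scope.

Section Aux.
Variables (A : comUnitRingType) (n : nat).

Lemma sum_delta (F : 'I_n -> A) b : \sum_a (a == b)%:R * F a = F b.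
Proof.
rewrite (bigD1 b) //= eqxx mul1r big1 ?addr0 // => a /negbTE ->; exact: mul0r.
Qed.

Lemma sum_delta' (F : 'I_n -> A) b : \sum_a (b == a)%:R * F a = F b.
Proof. rewrite -(sum_delta F b); apply: eq_bigr => a _; by rewrite eq_sym. Qed.

Lemma dirac2E g Gam e (f : A) :
  dirac2 g Gam e f =
  Cl2 (\sum_b \sum_r g b r * nabla1 Gam e b (dirac0 (n:=n) e f) r)
      (fun i j => nabla1 Gam e i (dirac0 e f) j - nabla1 Gam e j (dirac0 e f) i).
Proof.
rewrite /dirac2 /dirac1 /cl2_sum /cliff /=; congr Cl2.
  apply: eq_bigr => b _.
  rewrite -(sum_delta (fun a => \sum_b0 g a b0 * nabla1 Gam e b (dirac0 e f) b0) b).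
  apply: eq_bigr => a _; rewrite big_distrr /=; apply: eq_bigr => b0 _.
  rewrite /coframe; ring.
apply: functional_extensionality => i; apply: functional_extensionality => j.
rewrite /wedge_sum /coframe sumrB sum_delta' sum_delta'; done.
Qed.
End Aux.

Theorem mainTheorem3 (A : comUnitRingType) (n : nat)
  (g : 'I_n -> 'I_n -> A) (e : 'I_n -> A -> A)
  (c Gam Gamo : 'I_n -> 'I_n -> 'I_n -> A)
  (two_unit : (2%:R : A) \is a GRing.unit)
  (hder : forall a, is_derivation (e a))
  (hcomm : frame_comm e c)
  (hsym : metric_sym g) (hnd : metric_nondeg g)
  (hRC : riemann_cartan g Gam e c)
  (hLC : levi_civita g Gamo e c)
  (f : A) :
  dirac2 g Gam e f =
    Cl2 (\sum_b \sum_r g b r * e b (e r f)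
         - \sum_b \sum_r g b r * (\sum_a Gam a b r * e a f))
        (wedge_sum (fun b r => - (2%:R^-1 * \sum_a torsion Gam c a b r * e a f)))
  /\
  dirac2 g Gam e f =
    Cl2 (\sum_b \sum_a g b a * e b (e a f)
         - \sum_b \sum_r g b r * (\sum_a Gamo a b r * e a f)
         + \sum_a \sum_b torsion Gam c a a b * (\sum_d g b d * e d f))
        (wedge_sum (fun r s => - (2%:R^-1 * \sum_a torsion Gam c a r s * e a f))).
Proof.
have h2 : (2%:R^-1 + 2%:R^-1 : A) = 1.
  by transitivity (2%:R^-1 * (2%:R : A)); [ring | exact: mulVr two_unit].
have halfE : forall x : A, x = 2%:R^-1 * x + 2%:R^-1 * x.
  by move=> x; rewrite -mulrDl h2 mul1r.
have HS : forall i j, \sum_a torsion Gam c a i j * e a f =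
   \sum_a Gam a i j * e a f - \sum_a Gam a j i * e a f - (e i (e j f) - e j (e i f)).
  move=> i j; rewrite hcomm -!sumrB; apply: eq_bigr => a _; rewrite /torsion; ring.
have P1 : dirac2 g Gam e f =
    Cl2 (\sum_b \sum_r g b r * e b (e r f)
         - \sum_b \sum_r g b r * (\sum_a Gam a b r * e a f))
        (wedge_sum (fun b r => - (2%:R^-1 * \sum_a torsion Gam c a b r * e a f))).
  rewrite dirac2E; congr Cl2.
    rewrite -!sumrB; apply: eq_bigr => b _; rewrite -sumrB; apply: eq_bigr => r _.
    rewrite /nabla1 /dirac0; under [in RHS]eq_bigr => a _ do rewrite mulrC; ring.
  apply: functional_extensionality => i; apply: functional_extensionality => j.
  rewrite /wedge_sum !HS /nabla1 /dirac0.
  under eq_bigr => a _ do rewrite mulrC.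
  under [X in _ - (_ - X)]eq_bigr => a _ do rewrite mulrC.
  set Gij := \sum_a _ * _. set Gji := \sum_a _ * _.
  set C := e i (e j f) - e j (e i f).
  have -> : e j (e i f) - e i (e j f) = - C by rewrite /C; ring.
  set h := 2%:R^-1.
  rewrite [RHS](_ : _ = - (h * (Gij - Gji - C) + h * (Gij - Gji - C))); last by ring.
  rewrite -halfE /C; ring.
split => //.
rewrite P1; congr Cl2.
case: hRC => hmc _; case: hLC => hmco hto.
pose K := fun a k d => Gam a k d - Gamo a k d.
pose P := fun k x y => \sum_c0 K x k c0 * g c0 y.
have Panti : forall k x y, P k x y = - P k y x.
  move=> k x y.
  have E := etrans (esym (hmco k x y)) (hmc k x y).
  have s1 : \sum_d Gam y k d * g x d = \sum_d Gam y k d * g d x.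
    by apply: eq_bigr => d _; rewrite hsym.
  have s2 : \sum_d Gamo y k d * g x d = \sum_d Gamo y k d * g d x.
    by apply: eq_bigr => d _; rewrite hsym.
  rewrite s1 s2 in E.
  rewrite /P /K.
  under eq_bigr => c0 _ do rewrite mulrBl.
  under [in RHS]eq_bigr => c0 _ do rewrite mulrBl.
  rewrite !sumrB.
  apply/eqP; rewrite -subr_eq0; apply/eqP.
  set X1 := \sum_c0 Gam x k c0 * g c0 y.
  set Y1 := \sum_c0 Gamo x k c0 * g c0 y.
  set X2 := \sum_c0 Gam y k c0 * g c0 x.
  set Y2 := \sum_c0 Gamo y k c0 * g c0 x.
  transitivity ((- Y1 - Y2) - (- X1 - X2)); first by rewrite /X1 /X2 /Y1 /Y2; ring.
  by rewrite E subrr.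
have tr : forall b, \sum_a K a b a = 0.
  move=> b.
  pose N := \matrix_(i, j) g i j : 'M[A]_n.
  pose Ni := invmx N.
  have hNi : forall x y, \sum_m g x m * Ni m y = (x == y)%:R.
    move=> x y; have := congr1 (fun M : 'M[A]_n => M x y) (mulmxV hnd : N *m Ni = 1%:M).
    rewrite !mxE => <-; apply: eq_bigr => m _; by rewrite mxE.
  have Nis : forall x y, Ni x y = Ni y x.
    have H : Ni^T = Ni.
      rewrite /Ni trmx_inv; congr invmx; apply/matrixP => i j; by rewrite !mxE hsym.
    by move=> x y; rewrite -{1}H mxE.
  have step : \sum_a K a b a = \sum_a \sum_m P b a m * Ni m a.
    apply: eq_bigr => a _.
    transitivity (\sum_c0 (c0 == a)%:R * K a b c0); first by rewrite sum_delta.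
    rewrite /P.
    under [in RHS]eq_bigr => m _ do rewrite big_distrl /=.
    rewrite [in RHS]exchange_big /=; apply: eq_bigr => c0 _.
    rewrite -hNi big_distrl /=; apply: eq_bigr => m _; ring.
  rewrite step.
  set S := \sum_a \sum_m P b a m * Ni m a.
  have SS : S = - S.
    rewrite {1}/S exchange_big /= -sumrN; apply: eq_bigr => m _.
    rewrite -sumrN; apply: eq_bigr => a _; rewrite Panti Nis; ring.
  by rewrite -[S]mul1r -h2 mulrDl {2}SS mulrN subrr.
have tK : forall a b, torsion Gam c a a b = K a a b - K a b a.
  move=> a b; rewrite -[LHS]subr0 -(hto a a b) /torsion /K; ring.
have hL : \sum_b \sum_r g b r * (\sum_a Gam a b r * e a f)
          - \sum_b \sum_r g b r * (\sum_a Gamo a b r * e a f)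
        = \sum_b \sum_r g b r * (\sum_a K a b r * e a f).
  rewrite -sumrB; apply: eq_bigr => b _; rewrite -sumrB; apply: eq_bigr => r _.
  rewrite -mulrBr -sumrB; congr (_ * _); apply: eq_bigr => a _; rewrite /K; ring.
have hA : \sum_a \sum_b K a a b * (\sum_d g b d * e d f)
          = \sum_a \sum_d P a a d * e d f.
  apply: eq_bigr => a _.
  under eq_bigr => b _ do rewrite big_distrr /=.
  rewrite exchange_big /=; apply: eq_bigr => d _; rewrite /P big_distrl /=.
  apply: eq_bigr => b _; ring.
have hB : \sum_b \sum_r g b r * (\sum_a K a b r * e a f)
          = - \sum_a \sum_d P a a d * e d f.
  rewrite -sumrN; apply: eq_bigr => b _.
  rewrite -sumrN.
  under [in RHS]eq_bigr => d _ do rewrite (Panti b b d).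
  under [in LHS]eq_bigr => r _ do rewrite big_distrr /=.
  rewrite exchange_big /=; apply: eq_bigr => a _; rewrite mulNr opprK /P big_distrl /=.
  apply: eq_bigr => r _; rewrite (hsym b r); ring.
have hZ : \sum_a \sum_b K a b a * (\sum_d g b d * e d f) = 0.
  rewrite exchange_big /=; apply: big1 => b _; by rewrite -big_distrl /= tr mul0r.
have hT : \sum_a \sum_b torsion Gam c a a b * (\sum_d g b d * e d f)
          = - \sum_b \sum_r g b r * (\sum_a K a b r * e a f).
  rewrite hB opprK -hA.
  transitivity (\sum_a \sum_b K a a b * (\sum_d g b d * e d f)
     - \sum_a \sum_b K a b a * (\sum_d g b d * e d f)); last by rewrite hZ subr0.
  rewrite -sumrB; apply: eq_bigr => a _.
  rewrite -sumrB; apply: eq_bigr => b _; rewrite tK; ring.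
rewrite hT -hL; ring.
Qed.
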